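(* Let $B$ and $W$ be independent standard real-valued Brownian motions. Then $$\frac{1}{4\pi^2}\int_{[0,1]^4}\int_{\mathbb{R}^2} p_1^2 p_2^2\, \mathbb{E}\!\left[e^{ip_1(B_{t_1}-W_{s_1}) + ip_2(B_{t_2}-W_{s_2})}\right] dp_1\,dp_2\,ds_1\,ds_2\,dt_1\,dt_2 = +\infty .$$ (The integrand is nonnegative, so the integral is well defined in $[0,\infty]$.) In particular, the second-order derivative intersection local time $L_{2,1,1} = \frac{i^2}{2\pi}\int_0^1\int_0^1\int_{\mathbb{R}} p^2 e^{ip(B_t - W_s)}\,dp\,ds\,dt$ of $B$ and $W$ (the case $d=1$, $k=2$, $T=1$, $H_1=H_2=\tfrac12$) does not have a finite second moment.
   Context: This serves as a counterexample to a claimed result that, for independent fractional Brownian motions with Hurst parameters $H_1,H_2$ and $\frac{H_1H_2}{H_1+H_2}(|k|+d)<1$, the $k$-th order derivative intersection local time exists in every $L^p$ and is exponentially integrable; with $d=1$, $k=2$, $H_1=H_2=\tfrac12$ this condition holds. The displayed integral is the formal expression for $\mathbb{E}[L_{2,1,1}^2]$. *)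

(* Defs.v *)
From HB Require Import structures.
From mathcomp Require Import all_boot all_order all_algebra.
From mathcomp Require Import all_classical all_reals all_analysis.
Set Implicit Arguments. Unset Strict Implicit. Unset Printing Implicit Defensive.
Import Order.TTheory GRing.Theory Num.Theory.
Import numFieldNormedType.Exports.
Local Open Scope classical_set_scope.
Local Open Scope ring_scope.

(* Two processes B W indexed by time t >= 0, defined on the probability space P,
   are a pair of independent standard real Brownian motions:
   - each B t, W t is a random variable (measurable);
   - every path t |-> B t w, t |-> W t w is continuous on [0, +oo);
   - the finite-dimensional distributions of (B, W) are those of two independent
     centered Gaussian processes with covariance min(s,t), expressed via the
     joint characteristic function
       E[exp(i (sum_k a_k B_{t_k} + sum_k b_k W_{s_k}))]
         = exp(-1/2 sum a_j a_k min(t_j,t_k) - 1/2 sum b_j b_k min(s_j,s_k)),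
     written through its real part (E[cos]) and imaginary part (E[sin]). *)
Definition indep_std_BM_pair {d} {T : measurableType d} {R : realType}
  (P : probability T R) (B W : R -> T -> R) : Prop :=
  (forall t, measurable_fun setT (B t)) /\
  (forall t, measurable_fun setT (W t)) /\
  (forall w, {within `[0, +oo[, continuous (fun t => B t w)}) /\
  (forall w, {within `[0, +oo[, continuous (fun t => W t w)}) /\
  (forall (n : nat) (tB tW a b : 'I_n -> R),
     (forall i, 0 <= tB i) -> (forall i, 0 <= tW i) ->
     let X := fun w => \sum_(i < n) a i * B (tB i) w + \sum_(i < n) b i * W (tW i) w in
     let v := \sum_(i < n) \sum_(j < n) a i * a j * Num.min (tB i) (tB j)
            + \sum_(i < n) \sum_(j < n) b i * b j * Num.min (tW i) (tW j) in
     (\int[P]_w (cos (X w))%:E = (expR (- (v / 2)))%:E)%E /\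
     (\int[P]_w (sin (X w))%:E = 0)%E).

(* Main.v *)
Require Import Defs.
From HB Require Import structures.
From mathcomp Require Import all_boot all_order all_algebra.
From mathcomp Require Import all_classical all_reals all_analysis.
From mathcomp Require Import ring lra.
Import Order.TTheory GRing.Theory Num.Theory.
Import numFieldNormedType.Exports.
Local Open Scope classical_set_scope.
Local Open Scope ring_scope.
Lemma ge0_le_integral_nm d (T : measurableType d) (R : realType)
  (mu : {measure set T -> \bar R}) (D : set T) (f g : T -> \bar R) :
  (forall x, D x -> (0 <= f x)%E) -> (forall x, D x -> (f x <= g x)%E) ->
  (\int[mu]_(x in D) f x <= \int[mu]_(x in D) g x)%E.
Proof.
move=> f0 fg.
have g0 : forall x, D x -> (0 <= g x)%E by move=> x Dx; exact: le_trans (f0 _ Dx) (fg _ Dx).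
rewrite !ge0_integralE//; apply: ereal_sup_le => _ [h hf <-]; exists h => //= x.
apply: le_trans (hf x) _; rewrite /patch; case: ifP => // /[!inE] Dx; exact: fg.
Qed.

Lemma step_integral (R : realType) (D : set R) (f : R -> \bar R) (l r c : R) :
  measurable D -> (forall x, D x -> (0 <= f x)%E) -> `[l, r] `<=` D -> l <= r -> 0 <= c ->
  (forall x, l <= x <= r -> (c%:E <= f x)%E) ->
  ((c * (r - l))%:E <= \int[lebesgue_measure]_(x in D) f x)%E.
Proof.
move=> mD f0 sD lr c0 cf.
apply: (@le_trans _ _ (\int[lebesgue_measure]_(x in D) (c * \1_(`[l, r]) x)%:E)%E); last first.
  apply: ge0_le_integral_nm => x Dx.
    by rewrite lee_fin mulr_ge0// indic_ge0.
  rewrite indicE; case: (boolP (x \in _)) => [xI|_]; last by rewrite mulr0 f0.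
  by rewrite mulr1; apply: cf; move: xI; rewrite inE /= in_itv.
have H := @integralZl_indic _ _ _ lebesgue_measure D _ (fun _ => `[l, r]%classic) c.
rewrite /= in H; rewrite H//; last first.
  2: idtac.
  by move=> c0'; move: (lt_le_trans c0' c0); rewrite ltxx.

rewrite integral_indic//= setIidl// lebesgue_measure_itv/=.
rewrite lte_fin; case: ltP => [_|]; first by rewrite EFinM EFinB.
move=> rl; have -> : r = l by apply/eqP; rewrite eq_le lr rl.
by rewrite subrr mulr0 mule0.
Qed.
Lemma inner (R : realType) (a e t1 t2 s1 s2 p1 p2 : R) : 1 <= a -> e = (8 * a ^+ 2)^-1 ->
  1/2 <= t2 <= 1 -> t2 - e <= t1 <= t2 -> 1/2 <= s2 <= 1 -> s2 - e <= s1 <= s2 ->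
  a <= p2 <= 2 * a -> - p2 - 1/2 <= p1 <= - p2 + 1/2 ->
  a ^+ 4 / 4 * expR (-1) <= p1 ^+ 2 * p2 ^+ 2 *
    expR (- ((p1 ^+ 2 * t1 + 2 * p1 * p2 * Num.min t1 t2 + p2 ^+ 2 * t2
      + p1 ^+ 2 * s1 + 2 * p1 * p2 * Num.min s1 s2 + p2 ^+ 2 * s2) / 2)).
Proof.
move=> a1 ->{e} /andP[t2l t2u] /andP[t1l t1u] /andP[s2l s2u] /andP[s1l s1u]
  /andP[p2l p2u] /andP[p1l p1u].
have a0 : 0 < a by lra.
have a2 : 1 <= a ^+ 2 by rewrite expr2; nra.
have ie : 0 < (8 * a ^+ 2)^-1 by rewrite invr_gt0; lra.
have ie8 : (8 * a ^+ 2)^-1 * (8 * a ^+ 2) = 1 by rewrite mulVf //; lra.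
have ie1 : (8 * a ^+ 2)^-1 <= 1/8.
  rewrite -[X in _ <= X]mulr1 -[X in _ <= 1/8 * X]ie8.
  have : 0 < (8 * a ^+ 2)^-1 by [].
  nra.
rewrite (min_idPl t1u) (min_idPl s1u).
set V := (X in expR (- (X / 2))).
have eV : V = (t1 + s1) * (p1 + p2) ^+ 2 + (t2 - t1 + s2 - s1) * p2 ^+ 2.
  rewrite /V; ring.
have q2 : (p1 + p2) ^+ 2 <= 1/4 by rewrite expr2; nra.
have Vq : (t1 + s1) * (p1 + p2) ^+ 2 <= 1/2.
  have : 0 <= (p1 + p2) ^+ 2 by exact: sqr_ge0.
  have : t1 + s1 <= 2 by lra.
  have : 0 <= t1 + s1 by lra.
  nra.
have Vd : (t2 - t1 + s2 - s1) * p2 ^+ 2 <= 1.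
  have hd : t2 - t1 + s2 - s1 <= 2 * (8 * a ^+ 2)^-1 by lra.
  have hp : p2 ^+ 2 <= 4 * a ^+ 2 by rewrite !expr2; nra.
  have hd0 : 0 <= t2 - t1 + s2 - s1 by lra.
  have hp0 : 0 <= p2 ^+ 2 by exact: sqr_ge0.
  have : (t2 - t1 + s2 - s1) * p2 ^+ 2 <= 2 * (8 * a ^+ 2)^-1 * (4 * a ^+ 2).
    by apply: ler_pM.
  suff -> : 2 * (8 * a ^+ 2)^-1 * (4 * a ^+ 2) = 1 by [].
  have -> : 2 * (8 * a ^+ 2)^-1 * (4 * a ^+ 2) = (8 * a ^+ 2)^-1 * (8 * a ^+ 2) by ring.
  exact: ie8.
have eb : expR (-1) <= expR (- (V / 2)) by rewrite ler_expR; lra.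
have pb : a ^+ 4 / 4 <= p1 ^+ 2 * p2 ^+ 2.
  have h1 : a ^+ 2 / 4 <= p1 ^+ 2 by rewrite !expr2; nra.
  have h2 : a ^+ 2 <= p2 ^+ 2 by rewrite !expr2; nra.
  have -> : a ^+ 4 / 4 = a ^+ 2 / 4 * a ^+ 2 by ring.
  apply: ler_pM => //; last by lra.
  by apply: divr_ge0; [exact: sqr_ge0|].
apply: ler_pM => //.
  by apply: divr_ge0; [apply: exprn_ge0; lra|].
Qed.
Lemma charf (d : measure_display) (T : measurableType d) (R : realType)
  (P : probability T R) (B W : R -> T -> R) :
  indep_std_BM_pair P B W ->
  forall t1 t2 s1 s2 p1 p2 : R, 0 <= t1 -> 0 <= t2 -> 0 <= s1 -> 0 <= s2 ->
  (\int[P]_w (cos (p1 * (B t1 w - W s1 w) + p2 * (B t2 w - W s2 w)))%:E =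
    (expR (- ((p1 ^+ 2 * t1 + 2 * p1 * p2 * Num.min t1 t2 + p2 ^+ 2 * t2
      + p1 ^+ 2 * s1 + 2 * p1 * p2 * Num.min s1 s2 + p2 ^+ 2 * s2) / 2)))%:E)%E /\
  (\int[P]_w (sin (p1 * (B t1 w - W s1 w) + p2 * (B t2 w - W s2 w)))%:E = 0)%E.
Proof.
move=> [_ [_ [_ [_ Hc]]]] t1 t2 s1 s2 p1 p2 h1 h2 h3 h4.
have Hp1 : forall i : 'I_2, 0 <= nth 0 [:: t1; t2] i by case=> [[|[|k]] Hk].
have Hp2 : forall i : 'I_2, 0 <= nth 0 [:: s1; s2] i by case=> [[|[|k]] Hk].
have [Hcos Hsin] := Hc 2 _ _ (fun i => nth 0 [:: p1; p2] i) (fun i => nth 0 [:: - p1; - p2] i) Hp1 Hp2.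
have eX : forall w, (\sum_(i < 2) nth 0 [:: p1; p2] i * B (nth 0 [:: t1; t2] i) w +
     \sum_(i < 2) nth 0 [:: - p1; - p2] i * W (nth 0 [:: s1; s2] i) w) =
     p1 * (B t1 w - W s1 w) + p2 * (B t2 w - W s2 w).
  by move=> w; rewrite !big_ord_recr !big_ord0 /=; ring.
split.
- rewrite (eq_integral (fun w => (cos (\sum_(i < 2) nth 0 [:: p1; p2] i * B (nth 0 [:: t1; t2] i) w +
     \sum_(i < 2) nth 0 [:: - p1; - p2] i * W (nth 0 [:: s1; s2] i) w))%:E)); last first.
    by move=> w _; rewrite eX.
  rewrite Hcos; congr (expR _)%:E; congr (- (_ / 2)).
  rewrite !big_ord_recr !big_ord0 /= !minxx (minC t2 t1) (minC s2 s1); ring.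
- rewrite (eq_integral (fun w => (sin (\sum_(i < 2) nth 0 [:: p1; p2] i * B (nth 0 [:: t1; t2] i) w +
     \sum_(i < 2) nth 0 [:: - p1; - p2] i * W (nth 0 [:: s1; s2] i) w))%:E)); last first.
    by move=> w _; rewrite eX.
  exact: Hsin.
Qed.

Lemma step2 (R : realType) (D : set R) (f : R -> \bar R) (l r c k : R) :
  measurable D -> (forall x, D x -> (0 <= f x)%E) -> `[l, r] `<=` D -> l <= r -> 0 <= c ->
  c * (r - l) = k ->
  (forall x, l <= x <= r -> (c%:E <= f x)%E) ->
  (k%:E <= \int[lebesgue_measure]_(x in D) f x)%E.
Proof. by move=> mD f0 sD lr c0 <-; exact: step_integral. Qed.

Lemma mem01 (R : realType) (x : R) : `[0%R, 1%R]%classic x -> 0 <= x.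
Proof. by rewrite /= in_itv => /andP[]. Qed.

Lemma ereal_big (R : realType) (x : \bar R) (k : R) : 0 < k ->
  (forall a : R, 1 <= a -> ((k * a)%:E <= x)%E) -> x = +oo%E.
Proof.
move=> k0; case: x => [r| |] // H.
  have h : 0 <= `|r| / k by rewrite divr_ge0 // ltW.
  have ha : 1 <= `|r| / k + 1 by lra.
  have := H _ ha.
  rewrite lee_fin.
  have -> : k * (`|r| / k + 1) = `|r| + k by field; lra.
  have : r <= `|r| by exact: Num.Theory.ler_norm.
  move=> h1 h2; exfalso; lra.
by have := H 1 (lexx _).
Qed.

Theorem mainTheorem5 (d : measure_display) (T : measurableType d) (R : realType)
  (P : probability T R) (B W : R -> T -> R) :
  indep_std_BM_pair P B W ->
  (* the integrand E[exp(i p1 (B_t1 - W_s1) + i p2 (B_t2 - W_s2))] is real and >= 0 *)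
  (forall t1 t2 s1 s2 p1 p2 : R, 0 <= t1 -> 0 <= t2 -> 0 <= s1 -> 0 <= s2 ->
     (\int[P]_w (sin (p1 * (B t1 w - W s1 w) + p2 * (B t2 w - W s2 w)))%:E = 0)%E /\
     (0 <= \int[P]_w (cos (p1 * (B t1 w - W s1 w) + p2 * (B t2 w - W s2 w)))%:E)%E) /\
  ((1 / (4 * pi ^+ 2))%:E *
   \int[lebesgue_measure]_(t2 in `[0%R, 1%R]) \int[lebesgue_measure]_(t1 in `[0%R, 1%R])
   \int[lebesgue_measure]_(s2 in `[0%R, 1%R]) \int[lebesgue_measure]_(s1 in `[0%R, 1%R])
   \int[lebesgue_measure]_(p2 in [set: R]) \int[lebesgue_measure]_(p1 in [set: R])
     ((p1 ^+ 2 * p2 ^+ 2)%:E *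
      \int[P]_w (cos (p1 * (B t1 w - W s1 w) + p2 * (B t2 w - W s2 w)))%:E)
   = +oo)%E.
Proof.
move=> H.
have g0 : forall t1 t2 s1 s2 p1 p2 : R, 0 <= t1 -> 0 <= t2 -> 0 <= s1 -> 0 <= s2 ->
  (0 <= (p1 ^+ 2 * p2 ^+ 2)%:E *
      \int[P]_w (cos (p1 * (B t1 w - W s1 w) + p2 * (B t2 w - W s2 w)))%:E)%E.
  move=> t1 t2 s1 s2 p1 p2 h1 h2 h3 h4.
  have [-> _] := (@charf _ _ _ _ _ _ H) t1 t2 s1 s2 p1 p2 h1 h2 h3 h4.
  by rewrite -EFinM lee_fin mulr_ge0 ?expR_ge0 // mulr_ge0 // sqr_ge0.
split.
  move=> t1 t2 s1 s2 p1 p2 h1 h2 h3 h4.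
  have [-> ->] := (@charf _ _ _ _ _ _ H) t1 t2 s1 s2 p1 p2 h1 h2 h3 h4.
  by split => //; rewrite lee_fin expR_ge0.
match goal with |- ((_ * ?J)%E = _) => set I := J end.
have HI : forall a : R, 1 <= a -> ((expR (-1) / 1024 * a)%:E <= I)%E.
  move=> a a1.
  have a0 : 0 < a by lra.
  have a2 : 1 <= a ^+ 2 by rewrite expr2; nra.
  pose e := (8 * a ^+ 2)^-1.
  have e0 : 0 < e by rewrite invr_gt0; lra.
  have ie8 : e * (8 * a ^+ 2) = 1 by rewrite mulVf //; lra.
  have e8 : e <= 1/8.
    rewrite -[X in _ <= X]mulr1 -[X in _ <= 1/8 * X]ie8.
    nra.
  pose C0 := a ^+ 4 / 4 * expR (-1).
  have C00 : 0 <= C0 by rewrite mulr_ge0 ?expR_ge0 // divr_ge0 // exprn_ge0 // ltW.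
  have -> : expR (-1) / 1024 * a = C0 * a * e / 2 * e / 2.
    rewrite /C0 /e; field; lra.
  have ha' : 0 <= a := ltW a0.
  have he' : 0 <= e := ltW e0.
  have K2 : 0 <= C0 * a := mulr_ge0 C00 ha'.
  have K3 : 0 <= C0 * a * e := mulr_ge0 K2 he'.
  have K4 : 0 <= C0 * a * e / 2 by apply: divr_ge0.
  have K5 : 0 <= C0 * a * e / 2 * e := mulr_ge0 K4 he'.
  rewrite /I.
  apply: (@step2 R _ _ (1/2) 1 (C0 * a * e / 2 * e)).
  - exact: measurable_itv.
  - move=> t2 Ht2; apply: integral_ge0 => t1 Ht1; apply: integral_ge0 => s2 Hs2.
    apply: integral_ge0 => s1 Hs1; apply: integral_ge0 => p2 _; apply: integral_ge0 => p1 _.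
    by apply: g0; apply: mem01.
  - move=> x /=; rewrite !in_itv /= => /andP[h1 h2]; apply/andP; split; lra.
  - lra.
  - done.
  - by field.
  move=> t2 /andP[t2l t2u].
  apply: (@step2 R _ _ (t2 - e) t2 (C0 * a * e / 2)).
  - exact: measurable_itv.
  - move=> t1 Ht1; apply: integral_ge0 => s2 Hs2.
    apply: integral_ge0 => s1 Hs1; apply: integral_ge0 => p2 _; apply: integral_ge0 => p1 _.
    by apply: g0; apply: mem01 => //; rewrite /= in_itv /=; apply/andP; split; lra.
  - move=> x /=; rewrite !in_itv /= => /andP[h1 h2]; apply/andP; split; lra.
  - lra.
  - done.
  - by field.
  move=> t1 /andP[t1l t1u].
  apply: (@step2 R _ _ (1/2) 1 (C0 * a * e)).
  - exact: measurable_itv.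
  - move=> s2 Hs2.
    apply: integral_ge0 => s1 Hs1; apply: integral_ge0 => p2 _; apply: integral_ge0 => p1 _.
    by apply: g0; apply: mem01 => //; rewrite /= in_itv /=; apply/andP; split; lra.
  - move=> x /=; rewrite !in_itv /= => /andP[h1 h2]; apply/andP; split; lra.
  - lra.
  - done.
  - by field.
  move=> s2 /andP[s2l s2u].
  apply: (@step2 R _ _ (s2 - e) s2 (C0 * a)).
  - exact: measurable_itv.
  - move=> s1 Hs1; apply: integral_ge0 => p2 _; apply: integral_ge0 => p1 _.
    by apply: g0; apply: mem01 => //; rewrite /= in_itv /=; apply/andP; split; lra.
  - move=> x /=; rewrite !in_itv /= => /andP[h1 h2]; apply/andP; split; lra.
  - lra.
  - done.
  - by field.
  move=> s1 /andP[s1l s1u].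
  apply: (@step2 R _ _ a (2 * a) C0).
  - exact: measurableT.
  - move=> p2 _; apply: integral_ge0 => p1 _.
    by apply: g0; lra.
  - by [].
  - lra.
  - by [].
  - by field.
  move=> p2 /andP[p2l p2u].
  apply: (@step2 R _ _ (- p2 - 1/2) (- p2 + 1/2) C0).
  - exact: measurableT.
  - by move=> p1 _; apply: g0; lra.
  - by [].
  - lra.
  - by [].
  - by field.
  move=> p1 /andP[p1l p1u].
  have [-> _] := (@charf _ _ _ _ _ _ H) t1 t2 s1 s2 p1 p2 (ltac:(lra) : 0 <= t1) (ltac:(lra) : 0 <= t2)
    (ltac:(lra) : 0 <= s1) (ltac:(lra) : 0 <= s2).
  rewrite -EFinM lee_fin.
  apply: (@inner R a e) => //; apply/andP; split; lra.
have k0 : 0 < expR (-1) / 1024 :> R.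
  by apply: divr_gt0; [exact: expR_gt0|lra].
clearbody I.
have HI' : I = +oo%E := @ereal_big R I _ k0 HI.
have pi0 : (0 : R) < 1 / (4 * pi ^+ 2).
  apply: divr_gt0; first lra.
  by apply: mulr_gt0; [lra|apply: exprn_gt0; exact: pi_gt0].
by rewrite HI' gt0_muley // lte_fin.
Qed.
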